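(* Let $k$ be any field and let $m,n\ge 1$. There exists a straight line program $\Gamma^{tR}$ of length $O(mn^2+n^3)$ which, on input the entries of an $m\times n$ matrix $A=(a_{ij})$ over $k$, has as its order-$n^2$ output the $n^2$ entries of the triangular reduced row echelon form of $A$. In particular, each entry of the triangular reduced row echelon form of $A$ is a constructible function of the $a_{ij}$ (an element of the ring generated from $k[a_{ij}]$ by ring operations and the quasi-inverse).
   Context: The quasi-inverse of a function $f$ is $\{f\}(p)=1/f(p)$ if $f(p)\neq0$ and $0$ otherwise. A straight line program on inputs $a_{-m'},\dots,a_{-1}$ (in tape cells $-m',\dots,-1$) is a finite list of instructions $\Gamma_0,\dots,\Gamma_{L-1}$; instruction $\Gamma_i$ writes into cell $i$ one of: $a_{i-j}+a_{i-k}$, $a_{i-j}-a_{i-k}$, $a_{i-j}\cdot a_{i-k}$, $\{a_{i-j}\}$, a constant $c\in k$, or a copy (''recall'') of $a_{i-j}$, with $j,k$ positive integers. Its length is $L$, and its order-$d$ output is $(a_{L-d},\dots,a_{L-1})$. The triangular reduced row echelon form (tRREF) of an $m\times n$ matrix $A$ is the $n\times n$ matrix $R_A$ whose $j$-th row is nonzero if and only if the (usual) reduced row echelon form of $A$ has a pivot in column $j$, in which case the $j$-th row of $R_A$ is the row of the RREF of $A$ containing that pivot. Thus the RREF of $A$ has a pivot in column $j$ iff the $(j,j)$ entry of $R_A$ equals $1$ (and otherwise it is $0$). *)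

(* Defs.v *)
From HB Require Import structures.
From mathcomp Require Import all_boot all_order all_algebra.
Set Implicit Arguments. Unset Strict Implicit. Unset Printing Implicit Defensive.
Import Order.TTheory GRing.Theory Num.Theory.
Local Open Scope ring_scope.

Definition qinv (k : fieldType) (x : k) : k := if x == 0 then 0 else x^-1.

(* Straight line program instructions.  Offsets j, l are meant to be
   positive integers; instruction i reads cells i-j, i-l. *)
Inductive instr (k : fieldType) : Type :=
  | IAdd of nat & nat
  | ISub of nat & nat
  | IMul of nat & nat
  | IQinv of nat
  | IConst of k
  | IRecall of nat.

Definition slp (k : fieldType) := seq (instr k).

Definition instr_offsets (k : fieldType) (g : instr k) : seq nat :=
  match g with
  | IAdd j l | ISub j l | IMul j l => [:: j; l]
  | IQinv j | IRecall j => [:: j]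
  | IConst _ => [::]
  end.

(* Well-formedness on m' inputs: instruction Gamma_i only uses offsets j with
   1 <= j and i - j >= -m', i.e. j <= m' + i. *)
Definition slp_wf (k : fieldType) (m' : nat) (p : slp k) : Prop :=
  forall i, (i < size p)%N ->
    all (fun j => (0 < j <= m' + i)%N) (instr_offsets (nth (IConst 0) p i)).

(* The tape is the list a_{-m'}, ..., a_{-1}, a_0, ..., a_{i-1};
   a_{i-j} is the entry at position size - j. *)
Definition tape_get (k : fieldType) (t : seq k) (j : nat) : k :=
  nth 0 t (size t - j).

Definition exec_instr (k : fieldType) (t : seq k) (g : instr k) : k :=
  match g with
  | IAdd j l => tape_get t j + tape_get t l
  | ISub j l => tape_get t j - tape_get t l
  | IMul j l => tape_get t j * tape_get t l
  | IQinv j => qinv (tape_get t j)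
  | IConst c => c
  | IRecall j => tape_get t j
  end.

Definition run_slp (k : fieldType) (p : slp k) (inputs : seq k) : seq k :=
  foldl (fun t g => rcons t (exec_instr t g)) inputs p.

Definition slp_output (k : fieldType) (d : nat) (p : slp k) (inputs : seq k)
  : seq k :=
  let t := run_slp p inputs in drop (size t - d) t.

Definition mx_entries (k : fieldType) (m n : nat) (A : 'M[k]_(m, n)) : seq k :=
  [seq A i j | i <- enum 'I_m, j <- enum 'I_n].

Definition is_pivot (k : fieldType) (m n : nat) (R : 'M[k]_(m, n))
  (i : 'I_m) (j : 'I_n) : bool :=
  (R i j != 0) && [forall j' : 'I_n, (j' < j)%N ==> (R i j' == 0)].

Definition is_rref (k : fieldType) (m n : nat) (R : 'M[k]_(m, n)) : Prop :=
  (forall (i1 i2 : 'I_m) (j2 : 'I_n), (i1 < i2)%N -> is_pivot R i2 j2 ->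
      exists2 j1 : 'I_n, (j1 < j2)%N & is_pivot R i1 j1) /\
  (forall (i : 'I_m) (j : 'I_n), is_pivot R i j ->
      R i j = 1 /\ forall i' : 'I_m, i' != i -> R i' j = 0).

Definition rref_of (k : fieldType) (m n : nat) (A R : 'M[k]_(m, n)) : Prop :=
  is_rref R /\ exists2 P : 'M[k]_m, P \in unitmx & R = P *m A.

Definition tRREF (k : fieldType) (m n : nat) (R : 'M[k]_(m, n)) : 'M[k]_n :=
  \matrix_(j, l) match [pick i | is_pivot R i j] with
                 | Some i => R i l
                 | None => 0
                 end.

Inductive constructible (k : fieldType) (m n : nat) : ('M[k]_(m, n) -> k) -> Prop :=
  | cons_const (c : k) : constructible (fun _ => c)
  | cons_coord (i : 'I_m) (j : 'I_n) : constructible (fun A => A i j)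
  | cons_add f g : constructible f -> constructible g ->
      constructible (fun A => f A + g A)
  | cons_opp f : constructible f -> constructible (fun A => - f A)
  | cons_mul f g : constructible f -> constructible g ->
      constructible (fun A => f A * g A)
  | cons_qinv f : constructible f -> constructible (fun A => qinv (f A)).

(* Main.v *)
Require Import Defs.
From HB Require Import structures.
From mathcomp Require Import all_boot all_order all_algebra.
From Stdlib Require Import Lia FunctionalExtensionality.
Set Implicit Arguments. Unset Strict Implicit. Unset Printing Implicit Defensive.
Import Order.TTheory GRing.Theory Num.Theory.
Local Open Scope ring_scope.

Lemma qinvE (k : fieldType) (x : k) : qinv x = x^-1.
Proof. by rewrite /qinv; case: eqP => // ->; rewrite invr0. Qed.

Lemma mulqinv (k : fieldType) (x : k) : x * qinv x = (x != 0)%:R.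
Proof. by rewrite qinvE; case: eqP => [->|/eqP h]; rewrite ?mul0r ?divff. Qed.

Definition shape (k : fieldType) (n : nat) (T : 'M[k]_n) : Prop :=
 [/\ forall j l : 'I_n, (l < j)%N -> T j l = 0,
     forall j, T j j = 0 \/ T j j = 1,
     forall j l, T j j = 0 -> T j l = 0
   & forall j i, T j j = 1 -> i != j -> T i j = 0].

Lemma shape_idem (k : fieldType) (n : nat) (T : 'M[k]_n) :
  shape T -> T *m T = T.
Proof.
case=> h1 h2 h3 h4; apply/matrixP=> j l; rewrite !mxE.
case: (h2 j) => hj.
  by rewrite big1 ?(h3 _ _ hj) // => i _; rewrite h3 ?mul0r.
rewrite (bigD1 j) //= hj mul1r big1 ?addr0 // => i /negbTE ij.
case: (h2 i) => hi; first by rewrite (h3 _ _ hi) mulr0.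
by rewrite h4 ?mul0r // eq_sym ij.
Qed.

Lemma shape_uniq (k : fieldType) (n : nat) (T1 T2 : 'M[k]_n) :
  shape T1 -> shape T2 -> (T1 <= T2)%MS -> (T2 <= T1)%MS -> T1 = T2.
Proof.
move=> s1 s2 /submxP [D1 E1] /submxP [D2 E2].
have F1 : T1 = T1 *m T2 by rewrite E1 -mulmxA shape_idem.
have F2 : T2 = T2 *m T1 by rewrite E2 -mulmxA shape_idem.
have diag (S1 S2 : 'M[k]_n) : shape S1 -> shape S2 -> S1 = S1 *m S2 ->
    forall j, S1 j j = 1 -> S2 j j = 1.
  move=> [a1 b1 c1 d1] [a2 b2 c2 d2] F j hj.
  have := congr1 (fun M : 'M[k]_n => M j j) F; rewrite mxE (bigD1 j) //= big1 ?addr0.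
    by rewrite hj mul1r.
  move=> i ij; case: (ltngtP i j) => [lt|gt|/val_inj eq]; last by rewrite eq eqxx in ij.
    by rewrite a1 ?mul0r.
  by rewrite a2 ?mulr0.
have dg j : T1 j j = T2 j j.
  case: (s1) => _ b1 _ _; case: (s2) => _ b2 _ _.
  case: (b1 j) => h1; case: (b2 j) => h2; rewrite ?h1 ?h2 //.
    by have := diag _ _ s2 s1 F2 j h2; rewrite h1 => ->.
  by have := diag _ _ s1 s2 F1 j h1; rewrite h2.
apply/matrixP=> j l.
case: (s1) => a1 b1 c1 d1; case: (s2) => a2 b2 c2 d2.
case: (b1 j) => hj.
  by rewrite c1 // c2 // -dg.
rewrite F1 mxE (bigD1 j) //= hj mul1r big1 ?addr0 // => i ij.
case: (b2 i) => hi; first by rewrite c2 ?mulr0.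
have ji : j != i by rewrite eq_sym.
by rewrite (d1 i j) ?mul0r ?dg.
Qed.

Lemma first_nz (k : fieldType) (n : nat) (r : 'rV[k]_n) :
  r = 0 \/ exists p, r 0 p != 0 /\ forall l : 'I_n, (l < p)%N -> r 0 l = 0.
Proof.
case: (pickP (fun l => r 0 l != 0)) => [l0 hl0 | h]; last first.
  left; apply/matrixP=> i l; rewrite ord1 mxE.
  by have := h l => /= /negbFE/eqP.
right; case: (@arg_minnP _ l0 (fun l => r 0 l != 0) (fun l : 'I_n => val l) hl0) => p hp hmin.
exists p; split=> // l lp; apply/eqP; apply: contraTT lp => hl.
by rewrite -leqNgt hmin.
Qed.

Definition vpv (k : fieldType) (n : nat) (T : 'M[k]_n) (v : 'rV[k]_n) : 'rV_n :=
  v - v *m T.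
Definition dd (k : fieldType) (n : nat) (T : 'M[k]_n) (v : 'rV[k]_n) (l : 'I_n) :=
  vpv T v 0 l * qinv (vpv T v 0 l).
Definition ss (k : fieldType) (n : nat) (T : 'M[k]_n) (v : 'rV[k]_n) (l : 'I_n) :=
  (\prod_(i < n | (i < l)%N) (1 - dd T v i)) * dd T v l.
Definition cc (k : fieldType) (n : nat) (T : 'M[k]_n) (v : 'rV[k]_n) :=
  \sum_l ss T v l * qinv (vpv T v 0 l).
Definition ww (k : fieldType) (n : nat) (T : 'M[k]_n) (v : 'rV[k]_n) : 'rV_n :=
  cc T v *: vpv T v.
Definition uu (k : fieldType) (n : nat) (T : 'M[k]_n) (v : 'rV[k]_n) : 'cV_n :=
  \col_j (ss T v j - \sum_l T j l * ss T v l).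
Definition step (k : fieldType) (n : nat) (T : 'M[k]_n) (v : 'rV[k]_n) : 'M_n :=
  T + uu T v *m ww T v.

Lemma stepE (k : fieldType) (n : nat) (T : 'M[k]_n) (v : 'rV[k]_n) j l :
  step T v j l = T j l + uu T v j 0 * ww T v 0 l.
Proof. by rewrite /step [LHS]mxE [(_ *m _) _ _]mxE big_ord1. Qed.

Lemma vp_piv (k : fieldType) (n : nat) (T : 'M[k]_n) (v : 'rV[k]_n) j :
  shape T -> T j j = 1 -> vpv T v 0 j = 0.
Proof.
case=> _ _ _ h4 hj; rewrite /vpv !mxE (bigD1 j) //= hj mulr1 big1 ?addr0 ?subrr //.
by move=> i ij; rewrite h4 ?mulr0.
Qed.

Lemma step_vp0 (k : fieldType) (n : nat) (T : 'M[k]_n) (v : 'rV[k]_n) :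
  vpv T v = 0 -> step T v = T.
Proof.
move=> h.
have hs l : ss T v l = 0 by rewrite /ss /dd h mxE mul0r mulr0.
have hu : uu T v = 0.
  apply/matrixP=> j i; rewrite !mxE hs big1 ?subrr // => l _; by rewrite hs mulr0.
by rewrite /step hu mul0mx addr0.
Qed.

Lemma step_nz (k : fieldType) (n : nat) (T : 'M[k]_n) (v : 'rV[k]_n) p :
  vpv T v 0 p != 0 -> (forall l : 'I_n, (l < p)%N -> vpv T v 0 l = 0) ->
  (forall l, ss T v l = (l == p)%:R) /\ cc T v = (vpv T v 0 p)^-1.
Proof.
move=> hp hl.
have hd l : dd T v l = (vpv T v 0 l != 0)%:R by rewrite /dd mulqinv.
have hs l : ss T v l = (l == p)%:R.
  rewrite /ss; case: (ltngtP l p) => [lp|pl|/val_inj ->].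
  - by rewrite hd hl // eqxx mulr0 (introF eqP) // => e; rewrite e ltnn in lp.
  - rewrite (bigD1 p) //= hd hp subrr mul0r mul0r (introF eqP) // => e.
    by rewrite e ltnn in pl.
  - rewrite big1 ?mul1r ?hd ?hp ?eqxx // => i ip.
    by rewrite hd hl ?eqxx ?subr0.
split=> //; rewrite /cc (bigD1 p) //= hs eqxx mul1r big1 ?addr0 ?qinvE //.
by move=> i /negbTE ip; rewrite hs ip mul0r.
Qed.

Lemma step_facts (k : fieldType) (n : nat) (T : 'M[k]_n) (v : 'rV[k]_n) p :
  shape T -> vpv T v 0 p != 0 -> (forall l : 'I_n, (l < p)%N -> vpv T v 0 l = 0) ->
  [/\ T p p = 0, ww T v = (vpv T v 0 p)^-1 *: vpv T v,
      ww T v 0 p = 1,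
      forall l : 'I_n, (l < p)%N -> ww T v 0 l = 0 &
      [/\ forall l, T l l = 1 -> ww T v 0 l = 0,
          forall j l : 'I_n, step T v j l = T j l + ((j == p)%:R - T j p) * ww T v 0 l &
          forall j : 'I_n, step T v j j = if j == p then 1 else T j j]].
Proof.
move=> sT hp hl; have [hs hc] := step_nz hp hl.
case: (sT) => a1 b1 c1 d1.
have Tpp : T p p = 0.
  by case: (b1 p) => // h; rewrite (vp_piv v sT h) eqxx in hp.
have hww : ww T v = (vpv T v 0 p)^-1 *: vpv T v by rewrite /ww hc.
have hw l : ww T v 0 l = vpv T v 0 l / vpv T v 0 p by rewrite hww mxE mulrC.
have wp : ww T v 0 p = 1 by rewrite hw divff.
have wlt (l : 'I_n) : (l < p)%N -> ww T v 0 l = 0 by move=> lp; rewrite hw hl ?mul0r.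
have wpiv (l : 'I_n) : T l l = 1 -> ww T v 0 l = 0 by move=> h; rewrite hw vp_piv ?mul0r.
have hu (j : 'I_n) : uu T v j 0 = (j == p)%:R - T j p.
  rewrite mxE (bigD1 p) //= !hs eqxx mulr1 big1 ?addr0 // => i /negbTE ip.
  by rewrite hs ip mulr0.
have E (j l : 'I_n) : step T v j l = T j l + ((j == p)%:R - T j p) * ww T v 0 l.
  by rewrite stepE hu.
split=> //; split=> // j.
rewrite E; case: eqP => [->|/eqP jp]; first by rewrite Tpp wp subr0 mulr1 add0r.
rewrite sub0r; case: (ltngtP j p) => [jp'|pj|/val_inj e]; last by rewrite e eqxx in jp.
- by rewrite wlt // mulr0 addr0.
- by rewrite (a1 j p) // oppr0 mul0r addr0.
Qed.

Lemma step_shape (k : fieldType) (n : nat) (T : 'M[k]_n) (v : 'rV[k]_n) :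
  shape T -> shape (step T v).
Proof.
move=> sT; case: (first_nz (vpv T v)) => [h | [p [hp hl]]]; first by rewrite step_vp0.
have [Tpp _ wp wlt [wpiv E diag]] := step_facts sT hp hl.
case: (sT) => a1 b1 c1 d1.
split.
- move=> j l lj; rewrite E a1 // add0r.
  case: eqP => [e|/eqP jp]; first by rewrite wlt ?mulr0 // -e.
  rewrite sub0r; case: (ltngtP j p) => [jp'|pj|/val_inj e]; last by rewrite e eqxx in jp.
  - by rewrite wlt ?mulr0 // (ltn_trans lj jp').
  - by rewrite a1 // oppr0 mul0r.
- move=> j; rewrite diag; case: eqP => _; [by right | exact: b1].
- move=> j l; rewrite diag; case: eqP => [_ h|/eqP jp h0].
    by move/eqP: h; rewrite oner_eq0.
  by rewrite E (negbTE jp) (c1 _ _ h0) (c1 _ p h0) subrr mul0r addr0.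
- move=> j i; rewrite diag; case: eqP => [-> _ ip | jp h1 ij].
    by rewrite E (negbTE ip) wp mulr1 sub0r addrN.
  by rewrite E (d1 _ _ h1 ij) wpiv ?mulr0 ?addr0.
Qed.

Lemma step_eqmx (k : fieldType) (n : nat) (T : 'M[k]_n) (v : 'rV[k]_n) :
  shape T -> (step T v :=: T + v)%MS.
Proof.
move=> sT; apply/eqmxP/andP; split.
  rewrite /step addmx_sub ?addsmxSl //; apply: mulmx_sub.
  rewrite /ww scalemx_sub // /vpv addmx_sub ?addsmxSr //.
  rewrite eqmx_opp; exact: submx_trans (submxMl _ _) (addsmxSl _ _).
rewrite addsmx_sub; apply/andP.
have vE : v = vpv T v + v *m T by rewrite /vpv subrK.
case: (first_nz (vpv T v)) => [h | [p [hp hl]]].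
  rewrite step_vp0 //; split=> //; rewrite vE h add0r; exact: submxMl.
have [Tpp hww wp wlt [wpiv E diag]] := step_facts sT hp hl.
case: (sT) => a1 b1 c1 d1.
have rowp : row p (step T v) = ww T v.
  by apply/rowP=> l; rewrite mxE E eqxx Tpp subr0 mul1r (c1 _ _ Tpp) add0r.
have TE : T = step T v - uu T v *m row p (step T v) by rewrite rowp /step addrK.
have Ts : (T <= step T v)%MS.
  rewrite {1}TE addmx_sub // eqmx_opp; exact: mulmx_sub (row_sub _ _).
split=> //.
have hv : vpv T v = vpv T v 0 p *: ww T v by rewrite hww scalerA mulfV // scale1r.
rewrite {1}vE hv addmx_sub //; last exact: mulmx_sub.
by rewrite -rowp scalemx_sub // row_sub.
Qed.

Lemma pivot_uniq (k : fieldType) (m n : nat) (R : 'M[k]_(m, n)) i j1 j2 :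
  is_pivot R i j1 -> is_pivot R i j2 -> j1 = j2.
Proof.
move=> /andP[h1 /forallP f1] /andP[h2 /forallP f2].
case: (ltngtP j1 j2) => [lt|gt|/val_inj //].
  by have := f2 j1; rewrite lt /= => /eqP e; rewrite e eqxx in h1.
by have := f1 j2; rewrite gt /= => /eqP e; rewrite e eqxx in h2.
Qed.

Lemma tRREF_row (k : fieldType) (m n : nat) (R : 'M[k]_(m, n)) j :
  row j (tRREF R) = match [pick i | is_pivot R i j] with
                    | Some i => row i R | None => 0 end.
Proof.
apply/rowP=> l; rewrite !mxE; case: pickP => [i _|_] //; by rewrite !mxE.
Qed.

Lemma tRREF_shape (k : fieldType) (m n : nat) (R : 'M[k]_(m, n)) :
  is_rref R -> shape (tRREF R).
Proof.
case=> _ hpiv; split.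
- move=> j l lj; rewrite mxE; case: pickP => [i /andP[_ /forallP f] | _] //.
  by have := f l; rewrite lj => /eqP.
- move=> j; rewrite mxE; case: pickP => [i hi|_]; [right; exact: (hpiv _ _ hi).1 | by left].
- move=> j l; rewrite !mxE; case: pickP => [i hi | _] //.
  by rewrite (hpiv _ _ hi).1 => /eqP; rewrite oner_eq0.
- move=> j i; rewrite !mxE; case: (pickP (fun x => is_pivot R x j)) => [r hr|_]; last first.
    by move=> /eqP; rewrite eq_sym oner_eq0.
  move=> _ ij; case: (pickP (fun x => is_pivot R x i)) => [r' hr'|_] //.
  apply: (hpiv _ _ hr).2; apply/eqP=> e; move: hr'; rewrite e => hr'.
  by have := pivot_uniq hr' hr => e'; rewrite e' eqxx in ij.
Qed.

Lemma tRREF_eqmx (k : fieldType) (m n : nat) (R : 'M[k]_(m, n)) :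
  is_rref R -> (tRREF R :=: R)%MS.
Proof.
case=> _ hpiv; apply/eqmxP/andP; split.
  apply/row_subP=> j; rewrite tRREF_row; case: pickP => [i _|_].
    exact: row_sub.
  exact: sub0mx.
apply/row_subP=> i; case: (first_nz (row i R)) => [-> | [p [hp hl]]]; first exact: sub0mx.
have piv : is_pivot R i p.
  apply/andP; split.
    by move: hp; rewrite mxE.
  apply/forallP=> l; apply/implyP=> lp; by move: (hl l lp); rewrite mxE => ->.
have rp : row p (tRREF R) = row i R.
  rewrite tRREF_row; case: pickP => [i' hi'|hn]; last by have := hn i; rewrite piv.
  case: (eqVneq i' i) => [-> //|ne].
  have h0 := (hpiv _ _ hi').2 i; rewrite eq_sym ne in h0.
  by move: piv => /andP[]; rewrite h0 // eqxx.
by rewrite -rp row_sub.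
Qed.

Lemma nth_flatten_map (I T : Type) (x0 : T) (f : I -> seq T) (s : seq I) (y0 : I) n i j :
  (forall x, size (f x) = n) -> (i < size s)%N -> (j < n)%N ->
  nth x0 (flatten (map f s)) (i * n + j) = nth x0 (f (nth y0 s i)) j.
Proof.
move=> hs; elim: s i => [|x s IH] [|i] //= hi hj.
  by rewrite mul0n add0n nth_cat hs hj.
by rewrite nth_cat hs mulSn -addnA ltnNge leq_addr /= addKn IH.
Qed.

Lemma mx_entriesE (k : fieldType) (m n : nat) (A : 'M[k]_(m, n)) (i : 'I_m) (j : 'I_n) :
  nth 0 (mx_entries A) (i * n + j) = A i j.
Proof.
rewrite /mx_entries. rewrite (@nth_flatten_map _ _ 0 _ _ i n) ?size_enum_ord ?ltn_ord //.
  rewrite (nth_map j) ?size_enum_ord //; congr (A _ _); apply/val_inj=> /=.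
    by rewrite nth_enum_ord.
  by rewrite nth_enum_ord.
by move=> x; rewrite size_map size_enum_ord.
Qed.

Lemma size_mx_entries (k : fieldType) (m n : nat) (A : 'M[k]_(m, n)) :
  size (mx_entries A) = (m * n)%N.
Proof. by rewrite size_allpairs !size_enum_ord. Qed.

Definition rowsel (k : fieldType) (m n : nat) (A : 'M[k]_(m, n)) (r : nat) : 'rV[k]_n :=
  \row_l nth 0 (mx_entries A) (r * n + l).

Fixpoint Ts (k : fieldType) (m n : nat) (A : 'M[k]_(m, n)) (r : nat) : 'M[k]_n :=
  match r with 0 => 0 | r'.+1 => step (Ts A r') (rowsel A r') end.

Definition Bmx (k : fieldType) (m n : nat) (A : 'M[k]_(m, n)) (r : nat) : 'M[k]_(m, n) :=
  \matrix_(i, l) if (i < r)%N then A i l else 0.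

Lemma Bmx_step (k : fieldType) (m n : nat) (A : 'M[k]_(m, n)) r : (r < m)%N ->
  (Bmx A r + rowsel A r :=: Bmx A r.+1)%MS.
Proof.
move=> rm; set i0 := Ordinal rm.
have hsel : rowsel A r = row i0 (Bmx A r.+1).
  by apply/rowP=> l; rewrite !mxE ltnSn (mx_entriesE A i0 l).
apply/eqmxP/andP; split.
  rewrite addsmx_sub hsel row_sub andbT; apply/row_subP=> i.
  case: (ltnP i r) => hi.
    have -> : row i (Bmx A r) = row i (Bmx A r.+1).
      by apply/rowP=> l; rewrite !mxE hi (leqW hi).
    exact: row_sub.
  have -> : row i (Bmx A r) = 0 by apply/rowP=> l; rewrite !mxE ltnNge hi.
  exact: sub0mx.
apply/row_subP=> i; case: (ltngtP i r) => hi.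
- have -> : row i (Bmx A r.+1) = row i (Bmx A r).
    by apply/rowP=> l; rewrite !mxE hi (leqW hi).
  exact: submx_trans (row_sub _ _) (addsmxSl _ _).
- have -> : row i (Bmx A r.+1) = 0 by apply/rowP=> l; rewrite !mxE ltnNge hi.
  exact: sub0mx.
- have -> : i = i0 by apply/val_inj.
  by rewrite -hsel addsmxSr.
Qed.

Lemma Ts_inv (k : fieldType) (m n : nat) (A : 'M[k]_(m, n)) r : (r <= m)%N ->
  shape (Ts A r) /\ (Ts A r :=: Bmx A r)%MS.
Proof.
elim: r => [_|r IH rm] /=.
  have -> : Bmx A 0 = 0 by apply/matrixP=> i l; rewrite !mxE.
  split; last by apply/eqmxP; rewrite /eqmx !sub0mx.
  by split=> [j l _|j|j l _|j i _ _]; rewrite ?mxE //; left.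
have [sh eq] := IH (ltnW rm).
split; first exact: step_shape.
apply: eqmx_trans (step_eqmx _ sh) _.
apply: eqmx_trans (adds_eqmx eq (eqmx_refl _)) _.
exact: Bmx_step.
Qed.

Lemma final_eq (k : fieldType) (m n : nat) (A R : 'M[k]_(m, n)) :
  rref_of A R -> Ts A m = tRREF R.
Proof.
case=> rr [P uP RE]; subst R.
have [sh eq] := Ts_inv A (leqnn m).
have BA : Bmx A m = A by apply/matrixP=> i l; rewrite !mxE ltn_ord.
rewrite BA in eq.
have uP' : row_full P by rewrite row_full_unit.
have e2 := eqmx_trans (tRREF_eqmx rr) (eqmxMfull A uP').
have e3 : (Ts A m :=: tRREF (P *m A))%MS := eqmx_trans eq (eqmx_sym e2).
apply: shape_uniq sh (tRREF_shape rr) _ _.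
  by have /eqmxP/andP[] := e3.
by have /eqmxP/andP[] := e3.
Qed.

Definition M (k : fieldType) (A : Type) := nat -> seq (instr k) * A.
Definition retM (k : fieldType) (A : Type) (a : A) : M k A := fun _ => ([::], a).
Definition bindM (k : fieldType) (A B : Type) (c : M k A) (f : A -> M k B) : M k B :=
  fun N => let: (p1, a) := c N in let: (p2, b) := f a (N + size p1) in (p1 ++ p2, b).
Definition emitM (k : fieldType) (g : nat -> instr k) : M k nat := fun N => ([:: g N], N).
Definition addM (k : fieldType) (a b : nat) : M k nat := emitM (fun N => IAdd k (N - a) (N - b)).
Definition subM (k : fieldType) (a b : nat) : M k nat := emitM (fun N => ISub k (N - a) (N - b)).
Definition mulM (k : fieldType) (a b : nat) : M k nat := emitM (fun N => IMul k (N - a) (N - b)).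
Definition qinvM (k : fieldType) (a : nat) : M k nat := emitM (fun N => IQinv k (N - a)).
Definition recM (k : fieldType) (a : nat) : M k nat := emitM (fun N => IRecall k (N - a)).
Definition cstM (k : fieldType) (c : k) : M k nat := emitM (fun N => IConst c).

Definition ok (k : fieldType) (A : Type) (c : M k A) (t : seq k) (Q : seq k -> A -> Prop) :=
  slp_wf (size t) (c (size t)).1 /\ Q (run_slp (c (size t)).1 t) (c (size t)).2.

Definition holds (k : fieldType) (t : seq k) (a : nat) (x : k) := (a < size t)%N /\ nth 0 t a = x.
Definition ext (k : fieldType) (t t1 : seq k) := forall a x, holds t a x -> holds t1 a x.

Lemma ext_refl (k : fieldType) (t : seq k) : ext t t.
Proof. by []. Qed.
Lemma ext_trans (k : fieldType) (t1 t2 t3 : seq k) : ext t1 t2 -> ext t2 t3 -> ext t1 t3.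
Proof. by move=> h1 h2 a x /h1 /h2. Qed.
Lemma holds_eq (k : fieldType) (t : seq k) a x y : holds t a x -> x = y -> holds t a y.
Proof. by move=> h <-. Qed.

Lemma run_cat (k : fieldType) (p1 p2 : slp k) t :
  run_slp (p1 ++ p2) t = run_slp p2 (run_slp p1 t).
Proof. by rewrite /run_slp foldl_cat. Qed.

Lemma size_run (k : fieldType) (p : slp k) t : size (run_slp p t) = (size t + size p)%N.
Proof.
elim: p t => [|g p IH] t /=; first by rewrite addn0.
by rewrite IH size_rcons addSnnS.
Qed.

Lemma run_app (k : fieldType) (p : slp k) t : exists e, run_slp p t = t ++ e.
Proof.
elim: p t => [|g p IH] t /=; first by exists [::]; rewrite cats0.
have [e ->] := IH (rcons t (exec_instr t g)).
by exists (exec_instr t g :: e); rewrite -cats1 -catA.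
Qed.

Lemma ext_cat (k : fieldType) (t e : seq k) : ext t (t ++ e).
Proof.
move=> a x [h1 h2]; split; first by rewrite size_cat ltn_addr.
by rewrite nth_cat h1.
Qed.

Lemma ext_run (k : fieldType) (p : slp k) t : ext t (run_slp p t).
Proof. by have [e ->] := run_app p t; apply: ext_cat. Qed.

Lemma wf_cat (k : fieldType) N (p1 p2 : slp k) :
  slp_wf N p1 -> slp_wf (N + size p1) p2 -> slp_wf N (p1 ++ p2).
Proof.
move=> h1 h2 i; rewrite size_cat nth_cat => hi.
case: ltnP => hi1; first exact: h1.
have hi2 : (i - size p1 < size p2)%N by rewrite ltn_subLR.
apply: sub_all (h2 _ hi2) => j /andP[-> /=] hj.
by rewrite -addnA subnKC in hj.
Qed.

Lemma ok_bind (k : fieldType) (A B : Type) (c : M k A) (f : A -> M k B) t Q :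
  ok c t (fun t1 a => ok (f a) t1 Q) -> ok (bindM c f) t Q.
Proof.
rewrite /ok /bindM; case: (c (size t)) => p1 a /= [w1].
rewrite size_run; case: (f a (size t + size p1)) => p2 b /= [w2 hQ].
by split; [apply: wf_cat | rewrite run_cat].
Qed.

Lemma ok_ret (k : fieldType) (A : Type) (a : A) t (Q : seq k -> A -> Prop) :
  Q t a -> ok (retM k a) t Q.
Proof. by move=> h; split=> // i. Qed.

Lemma tape_getE (k : fieldType) (t : seq k) a : (a < size t)%N ->
  tape_get t (size t - a) = nth 0 t a.
Proof. by move=> h; rewrite /tape_get subKn // ltnW. Qed.

Lemma ok_emit (k : fieldType) (g : nat -> instr k) t x (Q : seq k -> nat -> Prop) :
  all (fun j => (0 < j <= size t)%N) (instr_offsets (g (size t))) ->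
  exec_instr t (g (size t)) = x ->
  (forall t1 r, ext t t1 -> holds t1 r x -> Q t1 r) -> ok (emitM g) t Q.
Proof.
move=> hw hx hQ; split.
  by move=> [|i] //= _; rewrite addn0.
apply: hQ; first exact: ext_run.
by rewrite /run_slp /holds /= size_rcons ltnSn nth_rcons ltnn eqxx hx.
Qed.

Lemma offs_ok (k : fieldType) (t : seq k) a : (a < size t)%N -> (0 < size t - a <= size t)%N.
Proof. by move=> h; rewrite subn_gt0 h leq_subr. Qed.

Lemma ok_add (k : fieldType) t a b (xa xb : k) Q : holds t a xa -> holds t b xb ->
  (forall t1 r, ext t t1 -> holds t1 r (xa + xb) -> Q t1 r) -> ok (addM k a b) t Q.
Proof.
move=> [ha ea] [hb eb]; apply: ok_emit; first by rewrite /= !offs_ok.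
by rewrite /= !tape_getE // ea eb.
Qed.

Lemma ok_sub (k : fieldType) t a b (xa xb : k) Q : holds t a xa -> holds t b xb ->
  (forall t1 r, ext t t1 -> holds t1 r (xa - xb) -> Q t1 r) -> ok (subM k a b) t Q.
Proof.
move=> [ha ea] [hb eb]; apply: ok_emit; first by rewrite /= !offs_ok.
by rewrite /= !tape_getE // ea eb.
Qed.

Lemma ok_mul (k : fieldType) t a b (xa xb : k) Q : holds t a xa -> holds t b xb ->
  (forall t1 r, ext t t1 -> holds t1 r (xa * xb) -> Q t1 r) -> ok (mulM k a b) t Q.
Proof.
move=> [ha ea] [hb eb]; apply: ok_emit; first by rewrite /= !offs_ok.
by rewrite /= !tape_getE // ea eb.
Qed.

Lemma ok_qinv (k : fieldType) t a (xa : k) Q : holds t a xa ->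
  (forall t1 r, ext t t1 -> holds t1 r (qinv xa) -> Q t1 r) -> ok (qinvM k a) t Q.
Proof.
move=> [ha ea]; apply: ok_emit; first by rewrite /= !offs_ok.
by rewrite /= !tape_getE // ea.
Qed.

Lemma ok_rec (k : fieldType) t a (xa : k) Q : holds t a xa ->
  (forall t1 r, ext t t1 -> holds t1 r xa -> Q t1 r) -> ok (recM k a) t Q.
Proof.
move=> [ha ea]; apply: ok_emit; first by rewrite /= !offs_ok.
by rewrite /= !tape_getE // ea.
Qed.

Lemma ok_cst (k : fieldType) t (c : k) Q :
  (forall t1 r, ext t t1 -> holds t1 r c -> Q t1 r) -> ok (cstM c) t Q.
Proof. by move=> h; apply: ok_emit. Qed.

Definition sz (k : fieldType) (A : Type) (c : M k A) (K : nat) := forall N, size (c N).1 = K.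

Lemma sz_bind (k : fieldType) (A B : Type) (c : M k A) (f : A -> M k B) K1 K2 :
  sz c K1 -> (forall a, sz (f a) K2) -> sz (bindM c f) (K1 + K2).
Proof.
move=> h1 h2 N; rewrite /bindM; have := h1 N; case: (c N) => p1 a /= <-.
by have := h2 a (N + size p1); case: (f a _) => p2 b /= <-; rewrite size_cat.
Qed.

Lemma sz_ret (k : fieldType) (A : Type) (a : A) : sz (retM k a) 0.
Proof. by []. Qed.
Lemma sz_emit (k : fieldType) (g : nat -> instr k) : sz (emitM g) 1.
Proof. by []. Qed.

Fixpoint dotM (k : fieldType) (a b : nat -> nat) (j s : nat) : M k nat :=
  match j with
  | 0 => retM k s
  | j'.+1 => bindM (dotM k a b j' s) (fun acc =>
             bindM (mulM k (a j') (b j')) (fun x => addM k acc x))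
  end.

Fixpoint scanM (k : fieldType) (om : nat -> nat) (j s : nat) : M k (seq nat) :=
  match j with
  | 0 => retM k [:: s]
  | j'.+1 => bindM (scanM k om j' s) (fun rs =>
             bindM (mulM k (last s rs) (om j')) (fun x => retM k (rcons rs x)))
  end.

Fixpoint mapM (k : fieldType) (F : nat -> M k nat) (j : nat) : M k (seq nat) :=
  match j with
  | 0 => retM k [::]
  | j'.+1 => bindM (mapM F j') (fun xs => bindM (F j') (fun x => retM k (rcons xs x)))
  end.

Lemma dot_spec (k : fieldType) (a b : nat -> nat) (xa xb : nat -> k) j s xs t Q :
  holds t s xs -> (forall i, (i < j)%N -> holds t (a i) (xa i) /\ holds t (b i) (xb i)) ->
  (forall t1 r, ext t t1 -> holds t1 r (xs + \sum_(0 <= i < j) xa i * xb i) -> Q t1 r) ->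
  ok (dotM k a b j s) t Q.
Proof.
move=> hs hab; elim: j Q hab => [|j IH] Q hab hQ /=.
  by apply: ok_ret; apply: hQ => //; rewrite big_geq ?addr0.
apply: ok_bind; apply: IH => [i lt|t1 acc e1 h1]; first exact: hab (ltnW lt).
have [ha hb] := hab j (ltnSn j); cbv beta.
apply: ok_bind. eapply (ok_mul (e1 _ _ ha) (e1 _ _ hb)) => t2 x e2 h2.
eapply (ok_add (e2 _ _ h1) h2) => t3 r e3 h3.
apply: hQ; first exact: ext_trans (ext_trans e1 e2) e3.
by rewrite big_nat_recr //= addrA.
Qed.

Lemma scan_spec (k : fieldType) (om : nat -> nat) (xo : nat -> k) j s xs t Q :
  holds t s xs -> (forall i, (i < j)%N -> holds t (om i) (xo i)) ->
  (forall t1 rs, ext t t1 -> size rs = j.+1 ->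
     (forall i, (i <= j)%N -> holds t1 (nth 0 rs i) (xs * \prod_(0 <= i' < i) xo i')) ->
     Q t1 rs) ->
  ok (scanM k om j s) t Q.
Proof.
move=> hs ho; elim: j Q ho => [|j IH] Q ho hQ /=.
  apply: ok_ret; apply: hQ => // i; rewrite leqn0 => /eqP -> /=.
  by rewrite big_geq ?mulr1.
apply: ok_bind; apply: IH => [i lt|t1 rs e1 hsz h1]; first exact: ho (ltnW lt).
have hl : last s rs = nth 0 rs j.
  by rewrite -nth_last hsz /= (set_nth_default 0) // hsz.
cbv beta; apply: ok_bind; rewrite hl; eapply (ok_mul (h1 j (leqnn j)) (e1 _ _ (ho j (ltnSn j)))) => t2 x e2 h2.
apply: ok_ret; apply: hQ; first exact: ext_trans e1 e2.
  by rewrite size_rcons hsz.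
move=> i hi; rewrite nth_rcons hsz; case: ltnP => lt.
  by apply: e2; apply: h1; rewrite -ltnS.
have -> : i = j.+1 by apply/eqP; rewrite eqn_leq hi lt.
by rewrite eqxx big_nat_recr //= mulrA.
Qed.

Lemma map_spec (k : fieldType) (F : nat -> M k nat) (g : nat -> k) j t Q :
  (forall l t1 Q', (l < j)%N -> ext t t1 ->
     (forall t2 r, ext t1 t2 -> holds t2 r (g l) -> Q' t2 r) -> ok (F l) t1 Q') ->
  (forall t1 rs, ext t t1 -> size rs = j ->
     (forall l, (l < j)%N -> holds t1 (nth 0 rs l) (g l)) -> Q t1 rs) ->
  ok (mapM F j) t Q.
Proof.
elim: j Q => [|j IH] Q hF hQ /=.
  by apply: ok_ret; apply: hQ.
apply: ok_bind; apply: IH => [l t1 Q' lt e1 h|t1 rs e1 hsz h1]; first exact: hF (ltnW lt) e1 h.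
cbv beta; apply: ok_bind; apply: hF => // t2 x e2 h2.
apply: ok_ret; apply: hQ; first exact: ext_trans e1 e2.
  by rewrite size_rcons hsz.
move=> l hl; rewrite nth_rcons hsz; case: ltnP => lt; first exact/e2/h1.
have -> : l = j by apply/eqP; rewrite eqn_leq -ltnS hl lt.
by rewrite eqxx.
Qed.

Lemma ok_rec_exact (k : fieldType) t a (xa : k) Q : holds t a xa ->
  Q (rcons t xa) (size t) -> ok (recM k a) t Q.
Proof.
move=> [ha ea] hQ; split; first by move=> [|i] //= _; rewrite addn0 /= offs_ok.
by rewrite /= tape_getE // ea.
Qed.

Lemma copy_spec (k : fieldType) (ad : nat -> nat) (g : nat -> k) j t Q :
  (forall q, (q < j)%N -> holds t (ad q) (g q)) -> (forall rs, Q (t ++ mkseq g j) rs) ->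
  ok (mapM (fun q => recM k (ad q)) j) t Q.
Proof.
elim: j Q => [|j IH] Q hg hQ /=.
  by apply: ok_ret; rewrite -(cats0 t); apply: hQ.
apply: ok_bind; apply: IH => [q lt|rs]; first exact: hg (ltnW lt).
cbv beta; apply: ok_bind; eapply ok_rec_exact; first exact: ext_cat (hg j (ltnSn j)).
by apply: ok_ret; rewrite rcons_cat -mkseqS.
Qed.

Lemma sz_dot (k : fieldType) (a b : nat -> nat) j s : sz (dotM k a b j s) (2 * j).
Proof.
elim: j s => [|j IH] s //=.
rewrite mulnS addnC; apply: sz_bind => // acc.
all: try exact: (sz_bind (K1 := 1) (K2 := 1)).
Qed.

Lemma sz_scan (k : fieldType) om j s : sz (scanM k om j s) j.
Proof.
elim: j s => [|j IH] s //=.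
rewrite -addn1; apply: sz_bind => // rs.
all: try exact: (sz_bind (K1 := 1) (K2 := 0)).
Qed.

Lemma sz_map (k : fieldType) (F : nat -> M k nat) K j :
  (forall l, sz (F l) K) -> sz (mapM F j) (j * K).
Proof.
move=> hF; elim: j => [|j IH] //=.
rewrite mulSn addnC.
have -> : (j * K + K = j * K + (K + 0))%N by rewrite addn0.
apply: sz_bind => // xs.
all: try exact: (sz_bind (K1 := K) (K2 := 0)).
Qed.

Definition rowstep (k : fieldType) (n : nat) (TA : nat -> nat -> nat) (vA : nat -> nat)
  : M k (nat -> nat -> nat) :=
 bindM (cstM (0 : k)) (fun z =>
 bindM (cstM (1 : k)) (fun one =>
 bindM (mapM (fun l => bindM (dotM k vA (fun j => TA j l) n z) (fun acc => subM k (vA l) acc)) n)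
   (fun vps =>
 bindM (mapM (fun l => qinvM k (nth 0 vps l)) n) (fun qs =>
 bindM (mapM (fun l => mulM k (nth 0 vps l) (nth 0 qs l)) n) (fun ds =>
 bindM (mapM (fun l => subM k one (nth 0 ds l)) n) (fun oms =>
 bindM (scanM k (nth 0 oms) n one) (fun fs =>
 bindM (mapM (fun l => mulM k (nth 0 fs l) (nth 0 ds l)) n) (fun ss =>
 bindM (dotM k (nth 0 ss) (nth 0 qs) n z) (fun c =>
 bindM (mapM (fun l => mulM k c (nth 0 vps l)) n) (fun ws =>
 bindM (mapM (fun j => bindM (dotM k (TA j) (nth 0 ss) n z)
                  (fun acc => subM k (nth 0 ss j) acc)) n) (fun us =>
 bindM (mapM (fun q => bindM (mulM k (nth 0 us (q %/ n)%N) (nth 0 ws (q %% n)%N))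
                  (fun x => addM k (TA (q %/ n)%N (q %% n)%N) x)) (n * n)%N) (fun Ts =>
 retM k (fun j l => nth 0 Ts (j * n + l)%N))))))))))))).

Definition rowK (n : nat) : nat := (
  1 + (1 + (n * (2 * n + 1) + (n * 1 + (n * 1 + (n * 1 + (n + (n * 1 + (2 * n +
  (n * 1 + (n * (2 * n + 1) + (n * n * (1 + 1) + 0))))))))))))%N.

Lemma sz_rowstep (k : fieldType) n TA vA : sz (rowstep k n TA vA) (rowK n).
Proof.
rewrite /rowstep /rowK.
apply: sz_bind => // z; apply: sz_bind => // one.
apply: sz_bind => [|vps]; first by apply: sz_map => l; apply: sz_bind => // acc; apply: sz_dot.
apply: sz_bind => [|qs]; first by apply: sz_map.
apply: sz_bind => [|ds]; first by apply: sz_map.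
apply: sz_bind => [|oms]; first by apply: sz_map.
apply: sz_bind => [|fs]; first exact: sz_scan.
apply: sz_bind => [|ss]; first by apply: sz_map.
apply: sz_bind => [|c]; first exact: sz_dot.
apply: sz_bind => [|ws]; first by apply: sz_map.
apply: sz_bind => [|us]; first by apply: sz_map => l; apply: sz_bind => // acc; apply: sz_dot.
apply: sz_bind => [|Ts] //; apply: sz_map => q; exact: sz_bind.
Qed.

Lemma sum_inord (k : fieldType) N (F : 'I_N.+1 -> k) :
  \sum_(0 <= i < N.+1) F (inord i) = \sum_i F i.
Proof. by rewrite big_mkord; apply: eq_bigr => i _; rewrite inord_val. Qed.

Lemma prod_inord (k : fieldType) N (F : 'I_N.+1 -> k) l : (l <= N.+1)%N ->
  \prod_(0 <= i < l) F (inord i) = \prod_(i < N.+1 | (i < l)%N) F i.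
Proof.
move=> hl; rewrite big_mkord (big_ord_widen N.+1 (fun i => F (inord i)) hl).
by apply: eq_bigr => i _; rewrite inord_val.
Qed.

Lemma val_inord' N (l : nat) : (l < N.+1)%N -> val (inord l : 'I_N.+1) = l.
Proof. exact: inordK. Qed.

Ltac tr e h := first [ have {h}h := e _ _ h
                     | have {h}h := fun x hx => e _ _ (h x hx)
                     | have {h}h := fun x y hx hy => e _ _ (h x y hx hy) ].

Lemma rowstep_spec (k : fieldType) (N : nat) (T : 'M[k]_N.+1) (v : 'rV[k]_N.+1)
  TA vA t Q :
  (forall j l, (j < N.+1)%N -> (l < N.+1)%N -> holds t (TA j l) (T (inord j) (inord l))) ->
  (forall l, (l < N.+1)%N -> holds t (vA l) (v 0 (inord l))) ->
  (forall t1 TA', ext t t1 ->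
     (forall j l, (j < N.+1)%N -> (l < N.+1)%N ->
        holds t1 (TA' j l) (step T v (inord j) (inord l))) -> Q t1 TA') ->
  ok (rowstep k N.+1 TA vA) t Q.
Proof.
move=> hT hv hQ; rewrite /rowstep.
apply: ok_bind; apply: ok_cst => t1 z e1 hz; cbv beta.
tr e1 hT; tr e1 hv; have {}hQ := fun t' TA' e => hQ t' TA' (ext_trans e1 e).
apply: ok_bind; apply: ok_cst => t2 one e2 hone; cbv beta.
tr e2 hT; tr e2 hv; tr e2 hz; have {}hQ := fun t' TA' e => hQ t' TA' (ext_trans e2 e).
apply: ok_bind; apply: (map_spec (g := fun l => vpv T v 0 (inord l))).
  move=> l t' Q' hl e' hQ'; apply: ok_bind.
  apply: (dot_spec (xa := fun i => v 0 (inord i)) (xb := fun i => T (inord i) (inord l))).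
  - exact: e' _ _ hz.
  - by move=> i hi; split; apply: e'; [apply: hv | apply: hT].
  move=> t'' acc e'' hacc; cbv beta.
  eapply (ok_sub (e'' _ _ (e' _ _ (hv l hl))) hacc) => t3 r e3 h3.
  apply: hQ' (ext_trans e'' e3) _; eapply (holds_eq h3).
  by rewrite /vpv !mxE add0r (sum_inord (fun i => v 0 i * T i (inord l))).
move=> t3 vps e3 _ hvp; cbv beta.
tr e3 hT; tr e3 hv; tr e3 hz; tr e3 hone; have {}hQ := fun t' TA' e => hQ t' TA' (ext_trans e3 e).
apply: ok_bind; apply: (map_spec (g := fun l => qinv (vpv T v 0 (inord l)))).
  move=> l t' Q' hl e' hQ'.
  by eapply (ok_qinv (e' _ _ (hvp l hl))) => t'' r e'' h''; apply: hQ' e'' h''.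
move=> t4 qs e4 _ hq; cbv beta.
tr e4 hT; tr e4 hv; tr e4 hz; tr e4 hone; tr e4 hvp; have {}hQ := fun t' TA' e => hQ t' TA' (ext_trans e4 e).
apply: ok_bind; apply: (map_spec (g := fun l => dd T v (inord l))).
  move=> l t' Q' hl e' hQ'.
  by eapply (ok_mul (e' _ _ (hvp l hl)) (e' _ _ (hq l hl))) => t'' r e'' h''; apply: hQ' e'' h''.
move=> t5 ds e5 _ hd; cbv beta.
tr e5 hT; tr e5 hv; tr e5 hz; tr e5 hone; tr e5 hvp; tr e5 hq; have {}hQ := fun t' TA' e => hQ t' TA' (ext_trans e5 e).
apply: ok_bind; apply: (map_spec (g := fun l => 1 - dd T v (inord l))).
  move=> l t' Q' hl e' hQ'.
  by eapply (ok_sub (e' _ _ hone) (e' _ _ (hd l hl))) => t'' r e'' h''; apply: hQ' e'' h''.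
move=> t6 oms e6 _ hom; cbv beta.
tr e6 hT; tr e6 hv; tr e6 hz; tr e6 hone; tr e6 hvp; tr e6 hq; tr e6 hd; have {}hQ := fun t' TA' e => hQ t' TA' (ext_trans e6 e).
apply: ok_bind; apply: (scan_spec (xo := fun i => 1 - dd T v (inord i)) hone hom).
move=> t7 fs e7 _ hf; cbv beta.
tr e7 hT; tr e7 hv; tr e7 hz; tr e7 hone; tr e7 hvp; tr e7 hq; tr e7 hd; have {}hQ := fun t' TA' e => hQ t' TA' (ext_trans e7 e).
apply: ok_bind; apply: (map_spec (g := fun l => ss T v (inord l))).
  move=> l t' Q' hl e' hQ'.
  eapply (ok_mul (e' _ _ (hf l (ltnW hl))) (e' _ _ (hd l hl))) => t'' r e'' h''; apply: hQ' e'' _.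
  eapply (holds_eq h''); rewrite mul1r /ss (prod_inord (fun i => 1 - dd T v i) (ltnW hl)).
  by rewrite val_inord'.
move=> t8 ssA e8 _ hs; cbv beta.
tr e8 hT; tr e8 hv; tr e8 hz; tr e8 hvp; tr e8 hq; have {}hQ := fun t' TA' e => hQ t' TA' (ext_trans e8 e).
apply: ok_bind.
apply: (dot_spec (xa := fun i => ss T v (inord i)) (xb := fun i => qinv (vpv T v 0 (inord i))) hz).
  by move=> i hi; split; [apply: hs | apply: hq].
move=> t9 c e9 hc; cbv beta.
tr e9 hT; tr e9 hz; tr e9 hvp; tr e9 hs; have {}hQ := fun t' TA' e => hQ t' TA' (ext_trans e9 e).
rewrite add0r (sum_inord (fun i => ss T v i * qinv (vpv T v 0 i))) -/(cc T v) in hc.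
apply: ok_bind; apply: (map_spec (g := fun l => ww T v 0 (inord l))).
  move=> l t' Q' hl e' hQ'.
  eapply (ok_mul (e' _ _ hc) (e' _ _ (hvp l hl))) => t'' r e'' h''; apply: hQ' e'' _.
  by eapply (holds_eq h''); rewrite /ww [RHS]mxE.
move=> t10 ws e10 _ hw; cbv beta.
tr e10 hT; tr e10 hz; tr e10 hs; have {}hQ := fun t' TA' e => hQ t' TA' (ext_trans e10 e).
apply: ok_bind; apply: (map_spec (g := fun j => uu T v (inord j) 0)).
  move=> j t' Q' hj e' hQ'; apply: ok_bind.
  apply: (dot_spec (xa := fun i => T (inord j) (inord i)) (xb := fun i => ss T v (inord i))).
  - exact: e' _ _ hz.
  - by move=> i hi; split; apply: e'; [apply: hT | apply: hs].
  move=> t'' acc e'' hacc; cbv beta.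
  eapply (ok_sub (e'' _ _ (e' _ _ (hs j hj))) hacc) => t3' r e3' h3.
  apply: hQ' (ext_trans e'' e3') _; eapply (holds_eq h3).
  by rewrite mxE add0r (sum_inord (fun i => T (inord j) i * ss T v i)).
move=> t11 us e11 _ hu; cbv beta.
tr e11 hT; tr e11 hw; have {}hQ := fun t' TA' e => hQ t' TA' (ext_trans e11 e).
have n0 : (0 < N.+1)%N by [].
apply: ok_bind; apply: (map_spec (g := fun q => step T v (inord (q %/ N.+1)) (inord (q %% N.+1)))).
  move=> q t' Q' hqn e' hQ'.
  have hq1 : (q %/ N.+1 < N.+1)%N by rewrite ltn_divLR.
  have hq2 : (q %% N.+1 < N.+1)%N by rewrite ltn_pmod.
  apply: ok_bind.
  eapply (ok_mul (e' _ _ (hu _ hq1)) (e' _ _ (hw _ hq2))) => t'' x e'' h''; cbv beta.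
  eapply (ok_add (e'' _ _ (e' _ _ (hT _ _ hq1 hq2))) h'') => t3' r e3' h3.
  by apply: hQ' (ext_trans e'' e3') _; eapply (holds_eq h3); rewrite stepE.
move=> t12 Ts e12 _ hTs; cbv beta.
apply: ok_ret; apply: hQ e12 _ => j l hj hl.
have hjl : (j * N.+1 + l < N.+1 * N.+1)%N.
  have h1 : (j * N.+1 + l < j.+1 * N.+1)%N by rewrite mulSn [(N.+1 + _)%N]addnC ltn_add2l.
  by apply: leq_trans h1 _; rewrite leq_mul2r hj orbT.
eapply (holds_eq (hTs _ hjl)).
by rewrite divnMDl // divn_small // addn0 modnMDl modn_small.
Qed.

Fixpoint rowsM (k : fieldType) (n r : nat) (TA0 : nat -> nat -> nat) : M k (nat -> nat -> nat) :=
  match r with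
  | 0 => retM k TA0
  | r'.+1 => bindM (rowsM k n r' TA0) (fun TA => rowstep k n TA (fun l => (r' * n + l)%N))
  end.

Definition prog (k : fieldType) (m n : nat) : M k (seq nat) :=
  bindM (cstM (0 : k)) (fun z =>
  bindM (rowsM k n m (fun _ _ => z)) (fun TA =>
  mapM (fun q => recM k (TA (q %/ n)%N (q %% n)%N)) (n * n)%N)).

Lemma sz_rows (k : fieldType) n r TA0 : sz (rowsM k n r TA0) (r * rowK n).
Proof.
elim: r => [|r IH] //=; rewrite mulSn addnC; apply: sz_bind => // TA.
exact: sz_rowstep.
Qed.

Lemma sz_prog (k : fieldType) m n : sz (prog k m n) (1 + (m * rowK n + n * n * 1)).
Proof.
rewrite /prog; apply: sz_bind => // z; apply: sz_bind => [|TA]; first exact: sz_rows.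
by apply: sz_map.
Qed.

Lemma rowK_le n : (0 < n)%N -> (rowK n <= 18 * (n * n))%N.
Proof.
move=> hn; rewrite /rowK; move/ssrnat.leP: hn => hn; apply/ssrnat.leP; rewrite /muln /addn in hn *; nia.
Qed.

Lemma size_bound m n : (1 <= m)%N -> (1 <= n)%N ->
  (1 + (m * rowK n + n * n * 1) <= 20 * (m * n ^ 2 + n ^ 3))%N.
Proof.
move=> hm hn; have h := @rowK_le n hn; rewrite !expnS expn0 !muln1.
move: h; set r := rowK n => h.
move/ssrnat.leP: hm => hm; move/ssrnat.leP: hn => hn; move/ssrnat.leP: h => h; apply/ssrnat.leP.
rewrite /muln /addn in hm hn h *; nia.
Qed.

Lemma rows_spec (k : fieldType) m N (A : 'M[k]_(m, N.+1)) r TA0 t Q :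
  (r <= m)%N -> ext (mx_entries A) t ->
  (forall j l, (j < N.+1)%N -> (l < N.+1)%N -> holds t (TA0 j l) 0) ->
  (forall t1 TA, ext t t1 ->
     (forall j l, (j < N.+1)%N -> (l < N.+1)%N ->
        holds t1 (TA j l) (Ts A r (inord j) (inord l))) -> Q t1 TA) ->
  ok (rowsM k N.+1 r TA0) t Q.
Proof.
move=> + eA h0; elim: r Q => [|r IH] Q hr hQ /=.
  apply: ok_ret; apply: hQ => // j l hj hl; eapply (holds_eq (h0 j l hj hl)).
  by rewrite mxE.
apply: ok_bind; apply: IH (ltnW hr) _ => t1 TA e1 h1; cbv beta.
apply: (rowstep_spec (T := Ts A r) (v := rowsel A r) h1).
  move=> l hl; have hq : (r * N.+1 + l < size (mx_entries A))%N.
    rewrite size_mx_entries; apply: leq_trans (_ : r.+1 * N.+1 <= _)%N.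
      by rewrite mulSn [(N.+1 + _)%N]addnC ltn_add2l.
    by rewrite leq_mul2r hr orbT.
  apply: e1; apply: eA; split=> //; by rewrite mxE inordK.
by move=> t2 TA' e2 h2; apply: hQ (ext_trans e1 e2) h2.
Qed.

Lemma mx_entries_mkseq (k : fieldType) N (B : 'M[k]_N.+1) :
  mx_entries B = mkseq (fun q => B (inord (q %/ N.+1)) (inord (q %% N.+1))) (N.+1 * N.+1).
Proof.
apply: (@eq_from_nth _ 0); first by rewrite size_mx_entries size_mkseq.
move=> q; rewrite size_mx_entries => hq; rewrite nth_mkseq //.
have hq1 : (q %/ N.+1 < N.+1)%N by rewrite ltn_divLR.
have hq2 : (q %% N.+1 < N.+1)%N by rewrite ltn_pmod.
have := mx_entriesE B (inord (q %/ N.+1)) (inord (q %% N.+1)).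
by rewrite !inordK // -divn_eq.
Qed.

Lemma prog_spec (k : fieldType) m N (A : 'M[k]_(m, N.+1)) :
  ok (prog k m N.+1) (mx_entries A)
     (fun t _ => drop (size t - N.+1 ^ 2) t = mx_entries (Ts A m)).
Proof.
rewrite /prog; apply: ok_bind; apply: ok_cst => t1 z e1 hz; cbv beta.
apply: ok_bind; apply: (rows_spec (r := m) (leqnn m) e1).
  by move=> *; apply: hz.
move=> t2 TA e2 h2; cbv beta.
apply: (copy_spec (g := fun q => Ts A m (inord (q %/ N.+1)) (inord (q %% N.+1)))).
  move=> q hq; apply: h2; [by rewrite ltn_divLR | by rewrite ltn_pmod].
move=> rs; rewrite size_cat size_mkseq -mulnn addnK drop_size_cat //.
by rewrite mx_entries_mkseq.
Qed.

Lemma run_rcons (k : fieldType) (p : slp k) g t :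
  run_slp (rcons p g) t = rcons (run_slp p t) (exec_instr (run_slp p t) g).
Proof. by rewrite -cats1 run_cat. Qed.

Lemma cells_cons (k : fieldType) m N (p : slp k) q :
  constructible (fun A : 'M[k]_(m, N.+1) => nth 0 (run_slp p (mx_entries A)) q).
Proof.
elim/last_ind: p q => [|p g IH] q.
  rewrite /run_slp /=; case: (ltnP q (m * N.+1)) => hq.
    have hq1 : (q %/ N.+1 < m)%N by rewrite ltn_divLR.
    have hq2 : (q %% N.+1 < N.+1)%N by rewrite ltn_pmod.
    have -> : (fun A : 'M[k]_(m, N.+1) => nth 0 (mx_entries A) q) =
              (fun A => A (Ordinal hq1) (Ordinal hq2)).
      apply: functional_extensionality => A.
      by rewrite -(mx_entriesE A (Ordinal hq1) (Ordinal hq2)) /= -divn_eq.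
    exact: cons_coord.
  have -> : (fun A : 'M[k]_(m, N.+1) => nth 0 (mx_entries A) q) = (fun _ => 0).
    by apply: functional_extensionality => A; rewrite nth_default // size_mx_entries.
  exact: cons_const.
set S := (m * N.+1 + size p)%N.
have -> : (fun A : 'M[k]_(m, N.+1) => nth 0 (run_slp (rcons p g) (mx_entries A)) q) =
          (fun A => if (q < S)%N then nth 0 (run_slp p (mx_entries A)) q
                    else if q == S then exec_instr (run_slp p (mx_entries A)) g else 0).
  apply: functional_extensionality => A.
  by rewrite run_rcons nth_rcons size_run size_mx_entries.
case: (q < S)%N; first exact: IH.
case: (q == S); last exact: cons_const.
have tg j : (fun A : 'M[k]_(m, N.+1) => tape_get (run_slp p (mx_entries A)) j) =
            (fun A => nth 0 (run_slp p (mx_entries A)) (S - j)).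
  apply: functional_extensionality => A.
  by rewrite /tape_get size_run size_mx_entries.
case: g => [j l|j l|j l|j|c|j] /=.
- by apply: (cons_add (f := fun A => tape_get _ j) (g := fun A => tape_get _ l)); rewrite tg.
- apply: (cons_add (f := fun A => tape_get _ j) (g := fun A => - tape_get _ l)).
    by rewrite tg.
  by apply: (cons_opp (f := fun A => tape_get _ l)); rewrite tg.
- by apply: (cons_mul (f := fun A => tape_get _ j) (g := fun A => tape_get _ l)); rewrite tg.
- by apply: (cons_qinv (f := fun A => tape_get _ j)); rewrite tg.
- exact: cons_const.
- by rewrite tg.
Qed.

Theorem proposition2p1 (k : fieldType) :
  exists C : nat,
    forall m n : nat, (1 <= m)%N -> (1 <= n)%N ->
      exists p : slp k,
        [/\ slp_wf (m * n) p,
            (size p <= C * (m * n ^ 2 + n ^ 3))%N,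
            (forall (A R : 'M[k]_(m, n)), rref_of A R ->
               slp_output (n ^ 2) p (mx_entries A) = mx_entries (tRREF R))
          & (forall R_of : 'M[k]_(m, n) -> 'M[k]_(m, n),
               (forall A, rref_of A (R_of A)) ->
               forall j l : 'I_n, constructible (fun A => tRREF (R_of A) j l))].
Proof.
exists 20%N => m [//|N] hm hn.
exists (prog k m N.+1 (m * N.+1)).1.
have out (A R : 'M[k]_(m, N.+1)) : rref_of A R ->
    slp_output (N.+1 ^ 2) (prog k m N.+1 (m * N.+1)).1 (mx_entries A) = mx_entries (tRREF R).
  move=> hAR; have [_ h] := prog_spec A; rewrite size_mx_entries in h.
  by rewrite /slp_output h (final_eq hAR).
split.
- by have [w _] := prog_spec (0 : 'M[k]_(m, N.+1)); rewrite size_mx_entries in w.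
- by rewrite (sz_prog k m N.+1 (m * N.+1)) size_bound.
- exact: out.
move=> R_of hR j l.
have -> : (fun A => tRREF (R_of A) j l) =
          (fun A => nth 0 (slp_output (N.+1 ^ 2) (prog k m N.+1 (m * N.+1)).1 (mx_entries A))
                          (j * N.+1 + l)).
  by apply: functional_extensionality => A; rewrite (out A (R_of A)) // mx_entriesE.
rewrite /slp_output.
set p := (prog k m N.+1 (m * N.+1)).1.
have -> : (fun A : 'M[k]_(m, N.+1) =>
             nth 0 (let t := run_slp p (mx_entries A) in drop (size t - N.+1 ^ 2) t)
                 (j * N.+1 + l)) =
          (fun A => nth 0 (run_slp p (mx_entries A))
                          ((m * N.+1 + size p) - N.+1 ^ 2 + (j * N.+1 + l))).
  apply: functional_extensionality => A.
  by rewrite /= nth_drop size_run size_mx_entries.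
exact: cells_cons.
Qed.
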